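(* Let $P$ be a finite nonempty set of points lying in a single quadrant $Q$ with respect to the origin $s$, and let $e\ne s$ be such that the line $\overline{se}$ is in the quadrant $Q$ but lies outside the two bounding lines, i.e. $\theta_{s,e}>\theta_{ub}$ or $\theta_{s,e}<\theta_{lb}$. Then, with $d^{\max}=\max_{p\in P} d(p,\overline{se})$, $$d^{\max} \ge \max\Big\{ \min\{d(l_1,\overline{se}),d(l_2,\overline{se})\},\ \min\{d(u_1,\overline{se}),d(u_2,\overline{se})\},\ D\Big\},$$ where $D = d(c_n,\overline{se})$ if $d(s,e) < d(s,c_f)$ and $D = d(c_f,\overline{se})$ if $d(s,e)\ge d(s,c_f)$; and $$d^{\max} \le \max\{ d(l_1,\overline{se}),d(l_2,\overline{se}),d(u_1,\overline{se}),d(u_2,\overline{se}),\ d(c_f,\overline{se})\}.$$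
   Context: Bounded Quadrant System (BQS) setup. Points are in the plane with UTM-projected $x$ and $y$ axes, and the start point $s$ is taken as the origin. For a point $p\ne s$, $\theta(p)\in[0,2\pi)$ is the angle between the positive $x$ axis and the vector from $s$ to $p$; $\theta_{s,e}=\theta(e)$. The four quadrants are $Q_k=\{p\neq s: (k-1)\pi/2 \le \theta(p) < k\pi/2\}$, $k=1,\dots,4$; quadrant $Q_k$ has angle range $[\theta^Q_{start},\theta^Q_{end}) = [(k-1)\pi/2,k\pi/2)$. A line $\overline{se}$ is ''in'' quadrant $Q$ if $\theta^Q_{start}\le \theta_{s,e}<\theta^Q_{end}$. For a finite nonempty $P\subset Q$: the bounding box is the smallest closed axis-parallel rectangle containing $P$, with corners $c_1,\dots,c_4$; $c_n$ and $c_f$ are the corners of the box nearest to and farthest from the origin $s$ (e.g. in the first quadrant $c_n=(x_{\min},y_{\min})$, $c_f=(x_{\max},y_{\max})$). $\theta_{lb}=\min_{p\in P}\theta(p)$ and $\theta_{ub}=\max_{p\in P}\theta(p)$; the lower (resp. upper) bounding line is the ray from $s$ at angle $\theta_{lb}$ (resp. $\theta_{ub}$). $l_1,l_2$ are the intersection points of the lower bounding line with the boundary of the bounding box and $u_1,u_2$ those of the upper bounding line, with index 1 the intersection nearer to $s$ (they may coincide). $d(p,\overline{se})$ is the Euclidean distance from the point $p$ to the line segment from $s$ to $e$. *)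

(* Defs.v *)
From Stdlib Require Import Reals Lra List.
Import ListNotations.
Open Scope R_scope.

(* Points of the plane; the start point s is the origin (0,0). *)
Definition pt := (R * R)%type.
Definition origin : pt := (0, 0).

Definition norm (p : pt) : R := sqrt (fst p * fst p + snd p * snd p).

Definition theta (p : pt) : R :=
  let r := norm p in
  if Rle_dec 0 (snd p) then acos (fst p / r) else 2 * PI - acos (fst p / r).

Definition in_quadrant (k : nat) (p : pt) : Prop :=
  p <> origin /\ INR (k - 1) * PI / 2 <= theta p < INR k * PI / 2.

Definition dist_seg (p e : pt) : R :=
  let t := Rmax 0 (Rmin 1 ((fst p * fst e + snd p * snd e) /
                           (fst e * fst e + snd e * snd e))) in
  norm (fst p - t * fst e, snd p - t * snd e).

Definition lmin (f : pt -> R) (l : list pt) : R :=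
  match l with nil => 0 | p :: l' => fold_right (fun q a => Rmin (f q) a) (f p) l' end.
Definition lmax (f : pt -> R) (l : list pt) : R :=
  match l with nil => 0 | p :: l' => fold_right (fun q a => Rmax (f q) a) (f p) l' end.

Definition xmin (P : list pt) := lmin fst P.
Definition xmax (P : list pt) := lmax fst P.
Definition ymin (P : list pt) := lmin snd P.
Definition ymax (P : list pt) := lmax snd P.

Definition in_box (P : list pt) (q : pt) : Prop :=
  xmin P <= fst q <= xmax P /\ ymin P <= snd q <= ymax P.

Definition c_near (k : nat) (P : list pt) : pt :=
  match k with
  | 1%nat => (xmin P, ymin P)
  | 2%nat => (xmax P, ymin P)
  | 3%nat => (xmax P, ymax P)
  | _ => (xmin P, ymax P)
  end.
Definition c_far (k : nat) (P : list pt) : pt :=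
  match k with
  | 1%nat => (xmax P, ymax P)
  | 2%nat => (xmin P, ymax P)
  | 3%nat => (xmin P, ymin P)
  | _ => (xmax P, ymin P)
  end.

Definition theta_lb (P : list pt) := lmin theta P.
Definition theta_ub (P : list pt) := lmax theta P.

Definition ray_pt (th t : R) : pt := (t * cos th, t * sin th).

Definition ray_box_near (P : list pt) (th t : R) : Prop :=
  0 <= t /\ in_box P (ray_pt th t) /\
  forall t', 0 <= t' -> in_box P (ray_pt th t') -> t <= t'.
Definition ray_box_far (P : list pt) (th t : R) : Prop :=
  0 <= t /\ in_box P (ray_pt th t) /\
  forall t', 0 <= t' -> in_box P (ray_pt th t') -> t' <= t.

Definition dmax (P : list pt) (e : pt) : R := lmax (fun p => dist_seg p e) P.

(* Main.v *)
Require Import Defs.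
From Stdlib Require Import Reals Lra Lia List.
Open Scope R_scope.

Definition dot (p q : pt) := fst p * fst q + snd p * snd q.
Definition N2 (p : pt) := dot p p.
Definition clampt (p e : pt) := Rmax 0 (Rmin 1 (dot p e / N2 e)).
Definition res (p e : pt) : pt := (fst p - clampt p e * fst e, snd p - clampt p e * snd e).

Lemma dist_seg_eq p e : dist_seg p e = sqrt (N2 (res p e)).
Proof. reflexivity. Qed.

Lemma N2_ge0 p : 0 <= N2 p.
Proof. unfold N2, dot. nra. Qed.

Lemma dist_ge0 p e : 0 <= dist_seg p e.
Proof. rewrite dist_seg_eq. apply sqrt_pos. Qed.

Lemma clamp_props p e : N2 e > 0 ->
  0 <= clampt p e <= 1 /\
  forall s, 0 <= s <= 1 -> (clampt p e - s) * (dot p e - clampt p e * N2 e) >= 0.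
Proof.
  intros HE. unfold clampt.
  set (c := dot p e) in *. set (E := N2 e) in *.
  destruct (Rle_dec (c / E) 0) as [H0|H0].
  - assert (c <= 0).
    { assert (c = (c/E) * E) by (field; lra). rewrite H. assert (0 <= - (c/E)) by lra. assert (0 <= - (c/E) * E) by (apply Rmult_le_pos; lra). lra. }
    rewrite (Rmin_right 1 (c/E)) by lra. rewrite Rmax_left by lra.
    split; [lra|]. intros s Hs. nra.
  - destruct (Rle_dec 1 (c / E)) as [H1|H1].
    + assert (E <= c).
      { assert (c = (c/E) * E) by (field; lra). rewrite H. nra. }
      rewrite (Rmin_left 1 (c/E)) by lra. rewrite Rmax_right by lra.
      split; [lra|]. intros s Hs. nra.
    + rewrite (Rmin_right 1 (c/E)) by lra. rewrite Rmax_right by lra.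
      split; [lra|]. intros s Hs.
      replace (c - c / E * E) with 0 by (field; lra). lra.
Qed.

Lemma dist_le_any p e s : N2 e > 0 -> 0 <= s <= 1 ->
  dist_seg p e <= sqrt (N2 (fst p - s * fst e, snd p - s * snd e)).
Proof.
  intros HE Hs. rewrite dist_seg_eq. apply sqrt_le_1_alt.
  destruct (clamp_props p e HE) as [Ht Hv]. specialize (Hv s Hs).
  unfold N2, res, dot in *. set (t := clampt p e) in *.
  assert (HE' : 0 <= (t - s) * (t - s) * (fst e * fst e + snd e * snd e)).
  { apply Rmult_le_pos; [apply Rle_0_sqr | nra]. }
  simpl.
  match goal with |- ?L <= ?R => assert (R = L + (t - s) * (t - s) * (fst e * fst e + snd e * snd e)
     + 2 * ((t - s) * (fst p * fst e + snd p * snd e - t * (fst e * fst e + snd e * snd e)))) by ring end.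
  lra.
Qed.

Lemma mono p e w h : N2 e > 0 -> 0 <= h ->
  dot (res p e) w >= 0 ->
  dist_seg p e <= dist_seg (fst p + h * fst w, snd p + h * snd w) e.
Proof.
  intros HE Hh Hw.
  set (q := (fst p + h * fst w, snd p + h * snd w)).
  destruct (clamp_props p e HE) as [Ht Hv].
  destruct (clamp_props q e HE) as [Ht' _].
  specialize (Hv (clampt q e) Ht').
  rewrite !dist_seg_eq. apply sqrt_le_1_alt.
  unfold N2, res, dot in *. set (t := clampt p e) in *. set (t' := clampt q e) in *.
  unfold q; simpl.
  set (rx := fst p - t * fst e). set (ry := snd p - t * snd e).
  assert (E1 : fst p + h * fst w - t' * fst e = rx + (h * fst w + (t - t') * fst e)) by (unfold rx; ring).
  assert (E2 : snd p + h * snd w - t' * snd e = ry + (h * snd w + (t - t') * snd e)) by (unfold ry; ring).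
  rewrite E1, E2.
  assert (Hre : (t - t') * (rx * fst e + ry * snd e) >= 0).
  { replace (rx * fst e + ry * snd e) with (fst p * fst e + snd p * snd e - t * (fst e * fst e + snd e * snd e)) by (unfold rx, ry; ring). lra. }
  simpl in Hw. fold rx ry in Hw.
  assert (Hhw : h * (rx * fst w + ry * snd w) >= 0) by (apply Rle_ge, Rmult_le_pos; lra).
  set (a := h * fst w + (t - t') * fst e). set (b := h * snd w + (t - t') * snd e).
  assert (rx * a + ry * b = h * (rx * fst w + ry * snd w) + (t - t') * (rx * fst e + ry * snd e)) by (unfold a, b; ring).
  assert (0 <= a * a + b * b) by nra.
  nra.
Qed.

Lemma radial p e l : N2 e > 0 -> 1 <= l ->
  dist_seg p e <= dist_seg (l * fst p, l * snd p) e.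
Proof.
  intros HE Hl.
  replace (l * fst p, l * snd p) with (fst p + (l - 1) * fst p, snd p + (l - 1) * snd p)
    by (f_equal; ring).
  apply mono; [exact HE | lra |].
  destruct (clamp_props p e HE) as [Ht Hv]. specialize (Hv 0 ltac:(lra)).
  unfold res, N2, dot in *. set (t := clampt p e) in *. simpl.
  set (rx := fst p - t * fst e). set (ry := snd p - t * snd e).
  assert (rx * fst p + ry * snd p = rx * rx + ry * ry + (t - 0) * (fst p * fst e + snd p * snd e - t * (fst e * fst e + snd e * snd e))) by (unfold rx, ry; ring).
  assert (0 <= rx * rx + ry * ry) by (apply Rplus_le_le_0_compat; apply Rle_0_sqr). lra.
Qed.

Definition mix (a : R) (A B : pt) : pt :=
  (a * fst A + (1 - a) * fst B, a * snd A + (1 - a) * snd B).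

Lemma N2_mix a v w : 0 <= a <= 1 -> N2 (mix a v w) <= Rmax (N2 v) (N2 w).
Proof.
  intros Ha. unfold mix, N2, dot; simpl.
  set (M := Rmax (fst v * fst v + snd v * snd v) (fst w * fst w + snd w * snd w)).
  assert (H1 : fst v * fst v + snd v * snd v <= M) by apply Rmax_l.
  assert (H2 : fst w * fst w + snd w * snd w <= M) by apply Rmax_r.
  assert (H3 : 2 * (fst v * fst w + snd v * snd w) <= 2 * M).
  { assert (0 <= (fst v - fst w) * (fst v - fst w) + (snd v - snd w) * (snd v - snd w))
      by (apply Rplus_le_le_0_compat; apply Rle_0_sqr). lra. }
  assert (Ha2 : 0 <= a * (1 - a)) by nra.
  replace ((a * fst v + (1 - a) * fst w) * (a * fst v + (1 - a) * fst w) +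
           (a * snd v + (1 - a) * snd w) * (a * snd v + (1 - a) * snd w))
    with (a * a * (fst v * fst v + snd v * snd v) + (1 - a) * (1 - a) * (fst w * fst w + snd w * snd w)
          + a * (1 - a) * (2 * (fst v * fst w + snd v * snd w))) by ring.
  assert (a * a * (fst v * fst v + snd v * snd v) <= a * a * M) by (apply Rmult_le_compat_l; nra).
  assert ((1 - a) * (1 - a) * (fst w * fst w + snd w * snd w) <= (1 - a) * (1 - a) * M) by (apply Rmult_le_compat_l; nra).
  assert (a * (1 - a) * (2 * (fst v * fst w + snd v * snd w)) <= a * (1 - a) * (2 * M)) by (apply Rmult_le_compat_l; nra).
  nra.
Qed.

Lemma convex a A B e : N2 e > 0 -> 0 <= a <= 1 ->
  dist_seg (mix a A B) e <= Rmax (dist_seg A e) (dist_seg B e).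
Proof.
  intros HE Ha.
  destruct (clamp_props A e HE) as [HA _].
  destruct (clamp_props B e HE) as [HB _].
  set (s := a * clampt A e + (1 - a) * clampt B e).
  assert (Hs : 0 <= s <= 1) by (unfold s; nra).
  eapply Rle_trans; [apply (dist_le_any _ _ s HE Hs)|].
  rewrite !dist_seg_eq.
  replace (fst (mix a A B) - s * fst e, snd (mix a A B) - s * snd e) with (mix a (res A e) (res B e))
    by (unfold mix, res, s; simpl; f_equal; ring).
  eapply Rle_trans; [apply sqrt_le_1_alt, N2_mix; exact Ha|].
  unfold Rmax at 1. destruct (Rle_dec (N2 (res A e)) (N2 (res B e))).
  - apply Rmax_r.
  - apply Rmax_l.
Qed.

Lemma norm_sq p : norm p * norm p = fst p * fst p + snd p * snd p.
Proof. unfold norm. apply sqrt_sqrt. nra. Qed.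

Lemma norm_pos p : p <> origin -> 0 < norm p.
Proof.
  intros Hp. unfold norm. apply sqrt_lt_R0.
  destruct p as [x y]; simpl.
  destruct (Req_dec x 0); destruct (Req_dec y 0).
  - subst. exfalso. apply Hp. reflexivity.
  - assert (0 < y * y) by (apply Rsqr_pos_lt; auto). nra.
  - assert (0 < x * x) by (apply Rsqr_pos_lt; auto). nra.
  - assert (0 < y * y) by (apply Rsqr_pos_lt; auto). nra.
Qed.

Lemma cos_2PI_minus a : cos (2 * PI - a) = cos a.
Proof. rewrite cos_minus, cos_2PI, sin_2PI. ring. Qed.
Lemma sin_2PI_minus a : sin (2 * PI - a) = - sin a.
Proof. rewrite sin_minus, cos_2PI, sin_2PI. ring. Qed.

Lemma theta_polar p : p <> origin ->
  fst p = norm p * cos (theta p) /\ snd p = norm p * sin (theta p).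
Proof.
  intros Hp. pose proof (norm_pos p Hp) as Hr. pose proof (norm_sq p) as Hsq.
  set (r := norm p) in *. set (x := fst p) in *. set (y := snd p) in *.
  assert (Hz : -1 <= x / r <= 1).
  { assert (Hz2 : (x / r) * (x / r) <= 1).
    { replace ((x / r) * (x / r)) with ((x * x) / (r * r)) by (field; lra).
      apply (Rmult_le_reg_r (r * r)); [nra|]. unfold Rdiv. rewrite Rmult_assoc, Rinv_l by nra. nra. }
    split; nra. }
  assert (Hc : r * cos (acos (x / r)) = x) by (rewrite cos_acos; [field; lra | exact Hz]).
  assert (Hs : sin (acos (x / r)) = Rabs (y / r)).
  { rewrite sin_acos by exact Hz. rewrite <- sqrt_Rsqr_abs. f_equal.
    unfold Rsqr. field_simplify_eq; [|lra]. nra. }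
  unfold theta. fold r x y.
  destruct (Rle_dec 0 y) as [Hy|Hy].
  - split; [lra|]. rewrite Hs. rewrite Rabs_pos_eq.
    + field; lra.
    + unfold Rdiv. assert (0 < / r) by (apply Rinv_0_lt_compat; lra). nra.
  - rewrite cos_2PI_minus, sin_2PI_minus. split; [lra|].
    rewrite Hs. rewrite Rabs_left.
    + field; lra.
    + unfold Rdiv. assert (0 < / r) by (apply Rinv_0_lt_compat; lra). nra.
Qed.

Lemma theta_unique p a : p <> origin -> 0 <= a < 2 * PI ->
  fst p = norm p * cos a -> snd p = norm p * sin a -> theta p = a.
Proof.
  intros Hp Ha Hx Hy. pose proof (norm_pos p Hp) as Hr.
  unfold theta. set (r := norm p) in *.
  assert (Hxr : fst p / r = cos a) by (rewrite Hx; field; lra).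
  rewrite Hxr.
  destruct (Rle_dec a PI) as [HaP|HaP].
  - assert (0 <= sin a) by (apply sin_ge_0; lra).
    destruct (Rle_dec 0 (snd p)) as [_|Hn].
    + apply acos_cos; lra.
    + exfalso. apply Hn. rewrite Hy. apply Rmult_le_pos; lra.
  - assert (sin a < 0) by (apply sin_lt_0; lra).
    destruct (Rle_dec 0 (snd p)) as [Hn|_].
    + exfalso. rewrite Hy in Hn. nra.
    + rewrite <- (cos_2PI_minus a). rewrite acos_cos by lra. ring.
Qed.

Lemma cross_u r1 r2 a b : 0 <= r1 -> 0 <= r2 -> 0 <= b - a <= PI ->
  0 <= (r1 * cos a) * (r2 * sin b) - (r1 * sin a) * (r2 * cos b).
Proof.
  intros H1 H2 Hab.
  replace ((r1 * cos a) * (r2 * sin b) - (r1 * sin a) * (r2 * cos b))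
    with (r1 * r2 * sin (b - a)) by (rewrite sin_minus; ring).
  apply Rmult_le_pos; [nra|]. apply sin_ge_0; lra.
Qed.

Definition Fmin (f : pt -> R) l a := fold_right (fun q a => Rmin (f q) a) a l.
Definition Fmax (f : pt -> R) l a := fold_right (fun q a => Rmax (f q) a) a l.

Lemma Fmin_props f l a : Fmin f l a <= a /\ (forall q, In q l -> Fmin f l a <= f q) /\
  (Fmin f l a = a \/ exists q, In q l /\ Fmin f l a = f q).
Proof.
  induction l as [|x l IH]; simpl.
  - split; [lra|]. split; [tauto|]. left; reflexivity.
  - unfold Fmin in *. simpl. destruct IH as [H1 [H2 H3]].
    set (m := fold_right (fun q a => Rmin (f q) a) a l) in *.
    split; [pose proof (Rmin_r (f x) m); lra|].
    split.
    + intros q [<-|Hq]; [apply Rmin_l|]. pose proof (Rmin_r (f x) m). specialize (H2 q Hq). lra.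
    + unfold Rmin. destruct (Rle_dec (f x) m).
      * right. exists x. auto.
      * destruct H3 as [H3|[q [Hq Hq']]]; [left; auto| right; exists q; auto].
Qed.

Lemma Fmax_props f l a : a <= Fmax f l a /\ (forall q, In q l -> f q <= Fmax f l a) /\
  (Fmax f l a = a \/ exists q, In q l /\ Fmax f l a = f q).
Proof.
  induction l as [|x l IH]; simpl.
  - split; [lra|]. split; [tauto|]. left; reflexivity.
  - unfold Fmax in *. simpl. destruct IH as [H1 [H2 H3]].
    set (m := fold_right (fun q a => Rmax (f q) a) a l) in *.
    split; [pose proof (Rmax_r (f x) m); lra|].
    split.
    + intros q [<-|Hq]; [apply Rmax_l|]. pose proof (Rmax_r (f x) m). specialize (H2 q Hq). lra.
    + unfold Rmax. destruct (Rle_dec (f x) m).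
      * destruct H3 as [H3|[q [Hq Hq']]]; [left; auto| right; exists q; auto].
      * right. exists x. auto.
Qed.

Lemma lmin_le f P p : In p P -> lmin f P <= f p.
Proof.
  destruct P as [|x l]; [simpl; tauto|]. intros Hp. simpl.
  destruct (Fmin_props f l (f x)) as [H1 [H2 _]]. unfold Fmin in *.
  destruct Hp as [<-|Hp]; auto.
Qed.

Lemma lmax_ge f P p : In p P -> f p <= lmax f P.
Proof.
  destruct P as [|x l]; [simpl; tauto|]. intros Hp. simpl.
  destruct (Fmax_props f l (f x)) as [H1 [H2 _]]. unfold Fmax in *.
  destruct Hp as [<-|Hp]; auto.
Qed.

Lemma lmin_att f P : P <> nil -> exists p, In p P /\ f p = lmin f P.
Proof.
  destruct P as [|x l]; [tauto|]. intros _. simpl.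
  destruct (Fmin_props f l (f x)) as [_ [_ [H|[q [Hq H]]]]]; unfold Fmin in *.
  - exists x. auto.
  - exists q. auto.
Qed.

Lemma lmax_att f P : P <> nil -> exists p, In p P /\ f p = lmax f P.
Proof.
  destruct P as [|x l]; [tauto|]. intros _. simpl.
  destruct (Fmax_props f l (f x)) as [_ [_ [H|[q [Hq H]]]]]; unfold Fmax in *.
  - exists x. auto.
  - exists q. auto.
Qed.

Lemma lmax_le f P M : P <> nil -> (forall p, In p P -> f p <= M) -> lmax f P <= M.
Proof.
  intros HP H. destruct (lmax_att f P HP) as [p [Hp <-]]. auto.
Qed.

Lemma lmin_map f g P : lmin f (map g P) = lmin (fun p => f (g p)) P.
Proof.
  destruct P as [|x l]; [reflexivity|]. simpl. induction l as [|y l IH]; simpl; congruence.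
Qed.

Lemma lmax_map f g P : lmax f (map g P) = lmax (fun p => f (g p)) P.
Proof.
  destruct P as [|x l]; [reflexivity|]. simpl. induction l as [|y l IH]; simpl; congruence.
Qed.

Lemma lmin_ext f g P : (forall p, In p P -> f p = g p) -> lmin f P = lmin g P.
Proof.
  destruct P as [|x l]; [reflexivity|]. intros H. simpl.
  rewrite (H x) by (left; auto).
  induction l as [|y l IH]; simpl; [reflexivity|].
  rewrite (H y) by (right; left; auto). rewrite IH; [reflexivity|].
  intros p [<-|Hp]; apply H; simpl; auto.
Qed.

Lemma lmax_ext f g P : (forall p, In p P -> f p = g p) -> lmax f P = lmax g P.
Proof.
  destruct P as [|x l]; [reflexivity|]. intros H. simpl.
  rewrite (H x) by (left; auto).
  induction l as [|y l IH]; simpl; [reflexivity|].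
  rewrite (H y) by (right; left; auto). rewrite IH; [reflexivity|].
  intros p [<-|Hp]; apply H; simpl; auto.
Qed.

Lemma Rmin_shift a b c : Rmin (a - c) (b - c) = Rmin a b - c.
Proof. unfold Rmin. destruct (Rle_dec (a - c) (b - c)), (Rle_dec a b); lra. Qed.
Lemma Rmax_shift a b c : Rmax (a - c) (b - c) = Rmax a b - c.
Proof. unfold Rmax. destruct (Rle_dec (a - c) (b - c)), (Rle_dec a b); lra. Qed.
Lemma Rmin_opp' a b : Rmin (- a) (- b) = - Rmax a b.
Proof. unfold Rmin, Rmax. destruct (Rle_dec (- a) (- b)), (Rle_dec a b); lra. Qed.
Lemma Rmax_opp' a b : Rmax (- a) (- b) = - Rmin a b.
Proof. unfold Rmin, Rmax. destruct (Rle_dec (- a) (- b)), (Rle_dec a b); lra. Qed.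

Lemma lmin_shift f P c : P <> nil -> lmin (fun p => f p - c) P = lmin f P - c.
Proof.
  destruct P as [|x l]; [tauto|]. intros _. simpl.
  induction l as [|y l IH]; simpl; [reflexivity|]. rewrite IH. apply Rmin_shift.
Qed.
Lemma lmax_shift f P c : P <> nil -> lmax (fun p => f p - c) P = lmax f P - c.
Proof.
  destruct P as [|x l]; [tauto|]. intros _. simpl.
  induction l as [|y l IH]; simpl; [reflexivity|]. rewrite IH. apply Rmax_shift.
Qed.
Lemma lmin_opp f P : P <> nil -> lmin (fun p => - f p) P = - lmax f P.
Proof.
  destruct P as [|x l]; [tauto|]. intros _. simpl.
  induction l as [|y l IH]; simpl; [reflexivity|]. rewrite IH. apply Rmin_opp'.
Qed.
Lemma lmax_opp f P : P <> nil -> lmax (fun p => - f p) P = - lmin f P.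
Proof.
  destruct P as [|x l]; [tauto|]. intros _. simpl.
  induction l as [|y l IH]; simpl; [reflexivity|]. rewrite IH. apply Rmax_opp'.
Qed.

Lemma clamp_mid p e : N2 e > 0 -> 0 <= dot p e <= N2 e -> clampt p e = dot p e / N2 e.
Proof.
  intros HE Hc. unfold clampt.
  assert (0 <= dot p e / N2 e <= 1).
  { split; [unfold Rdiv; apply Rmult_le_pos; [lra| left; apply Rinv_0_lt_compat; lra]|].
    apply (Rmult_le_reg_r (N2 e)); [lra|]. unfold Rdiv. rewrite Rmult_assoc, Rinv_l by lra. lra. }
  rewrite Rmin_right by lra. rewrite Rmax_right by lra. reflexivity.
Qed.

Lemma clamp_cases p e : N2 e > 0 ->
  (clampt p e = 0 /\ dot p e <= 0) \/ (clampt p e = 1 /\ N2 e <= dot p e) \/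
  (clampt p e = dot p e / N2 e /\ 0 <= dot p e <= N2 e).
Proof.
  intros HE.
  destruct (Rle_dec (dot p e) 0) as [H0|H0].
  - left. split; [|exact H0]. unfold clampt.
    assert (dot p e / N2 e <= 0).
    { unfold Rdiv. assert (0 < / N2 e) by (apply Rinv_0_lt_compat; lra). nra. }
    rewrite Rmin_right by lra. rewrite Rmax_left by lra. reflexivity.
  - destruct (Rle_dec (N2 e) (dot p e)) as [H1|H1].
    + right; left. split; [|exact H1]. unfold clampt.
      assert (1 <= dot p e / N2 e).
      { apply (Rmult_le_reg_r (N2 e)); [lra|]. unfold Rdiv. rewrite Rmult_assoc, Rinv_l by lra. lra. }
      rewrite Rmin_left by lra. rewrite Rmax_right by lra. reflexivity.
    + right; right. split; [apply clamp_mid|]; lra.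
Qed.

Lemma div_nonneg a b : 0 <= a -> 0 < b -> 0 <= a / b.
Proof. intros. unfold Rdiv. apply Rmult_le_pos; [lra| left; apply Rinv_0_lt_compat; lra]. Qed.

Lemma cn_up e xm ym y1 : N2 e > 0 -> 0 <= fst e -> 0 <= snd e -> 0 <= xm -> 0 <= ym -> ym <= y1 ->
  fst e * ym - snd e * xm >= 0 -> dist_seg (xm, ym) e <= dist_seg (xm, y1) e.
Proof.
  intros HE H1 H2 H3 H4 H5 H6.
  replace (xm, y1) with (fst (xm, ym) + (y1 - ym) * fst (0, 1), snd (xm, ym) + (y1 - ym) * snd (0, 1))
    by (simpl; f_equal; ring).
  apply mono; [exact HE| lra|].
  unfold res, dot; simpl.
  unfold N2, dot in *. simpl.
  destruct (clamp_cases (xm, ym) e HE) as [[Ht Hc]|[[Ht Hc]|[Ht Hc]]]; rewrite Ht;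
  unfold N2, dot in *; simpl in *.
  - lra.
  - assert (Hp : fst e * (fst e * ym - snd e * xm) >= 0) by (apply Rle_ge, Rmult_le_pos; lra).
    assert (Hk : snd e * (xm * fst e + ym * snd e) <= ym * (fst e * fst e + snd e * snd e)) by nra.
    assert (Hk2 : snd e * (fst e * fst e + snd e * snd e) <= snd e * (xm * fst e + ym * snd e)). { apply Rmult_le_compat_l; lra. }
    assert ((ym - snd e) * (fst e * fst e + snd e * snd e) >= 0) by nra.
    nra.
  - set (E := fst e * fst e + snd e * snd e) in *.
    match goal with |- ?g >= 0 => replace g with (fst e * (fst e * ym - snd e * xm) / E)
      by (unfold E in *; field; lra) end.
    apply Rle_ge, div_nonneg; [nra|lra].
Qed.

Lemma cn_right e xm ym x2 : N2 e > 0 -> 0 <= fst e -> 0 <= snd e -> 0 <= xm -> 0 <= ym -> xm <= x2 ->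
  snd e * xm - fst e * ym >= 0 -> dist_seg (xm, ym) e <= dist_seg (x2, ym) e.
Proof.
  intros HE H1 H2 H3 H4 H5 H6.
  replace (x2, ym) with (fst (xm, ym) + (x2 - xm) * fst (1, 0), snd (xm, ym) + (x2 - xm) * snd (1, 0))
    by (simpl; f_equal; ring).
  apply mono; [exact HE| lra|].
  unfold res, dot; simpl.
  unfold N2, dot in *. simpl.
  destruct (clamp_cases (xm, ym) e HE) as [[Ht Hc]|[[Ht Hc]|[Ht Hc]]]; rewrite Ht;
  unfold N2, dot in *; simpl in *.
  - lra.
  - assert (Hp : snd e * (snd e * xm - fst e * ym) >= 0) by (apply Rle_ge, Rmult_le_pos; lra).
    assert (Hk : fst e * (xm * fst e + ym * snd e) <= xm * (fst e * fst e + snd e * snd e)) by nra.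
    assert (Hk2 : fst e * (fst e * fst e + snd e * snd e) <= fst e * (xm * fst e + ym * snd e)) by (apply Rmult_le_compat_l; lra).
    assert ((xm - fst e) * (fst e * fst e + snd e * snd e) >= 0) by nra.
    nra.
  - set (E := fst e * fst e + snd e * snd e) in *.
    match goal with |- ?g >= 0 => replace g with (snd e * (snd e * xm - fst e * ym) / E)
      by (unfold E in *; field; lra) end.
    apply Rle_ge, div_nonneg; [nra|lra].
Qed.

Lemma cf_mid e X Y : N2 e > 0 -> 0 <= fst e -> 0 <= snd e -> 0 <= X -> 0 <= Y ->
  X * X + Y * Y <= N2 e -> clampt (X, Y) e = (X * fst e + Y * snd e) / N2 e.
Proof.
  intros HE H1 H2 H3 H4 H5. apply clamp_mid; [exact HE|]. unfold N2, dot in *; simpl in *.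
  set (c := X * fst e + Y * snd e). set (E := fst e * fst e + snd e * snd e) in *.
  assert (0 <= c) by (unfold c; nra).
  assert (c * c <= (X * X + Y * Y) * E).
  { unfold c, E. assert (0 <= (X * snd e - Y * fst e) * (X * snd e - Y * fst e)) by apply Rle_0_sqr. nra. }
  assert (c * c <= E * E) by nra.
  split; [lra|]. nra.
Qed.

Lemma cf_left e X Y x4 : N2 e > 0 -> 0 <= fst e -> 0 <= snd e -> 0 <= X -> 0 <= Y ->
  X * X + Y * Y <= N2 e -> fst e * Y - snd e * X >= 0 -> x4 <= X ->
  dist_seg (X, Y) e <= dist_seg (x4, Y) e.
Proof.
  intros HE H1 H2 H3 H4 H5 H6 H7.
  replace (x4, Y) with (fst (X, Y) + (X - x4) * fst (-1, 0), snd (X, Y) + (X - x4) * snd (-1, 0))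
    by (simpl; f_equal; ring).
  apply mono; [exact HE| lra|].
  unfold res. rewrite (cf_mid e X Y) by assumption. unfold N2, dot in *; simpl in *.
  set (E := fst e * fst e + snd e * snd e) in *.
  match goal with |- ?g >= 0 => replace g with (snd e * (fst e * Y - snd e * X) / E)
      by (unfold E in *; field; lra) end.
  apply Rle_ge, div_nonneg; [nra|lra].
Qed.

Lemma cf_down e X Y y3 : N2 e > 0 -> 0 <= fst e -> 0 <= snd e -> 0 <= X -> 0 <= Y ->
  X * X + Y * Y <= N2 e -> snd e * X - fst e * Y >= 0 -> y3 <= Y ->
  dist_seg (X, Y) e <= dist_seg (X, y3) e.
Proof.
  intros HE H1 H2 H3 H4 H5 H6 H7.
  replace (X, y3) with (fst (X, Y) + (Y - y3) * fst (0, -1), snd (X, Y) + (Y - y3) * snd (0, -1))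
    by (simpl; f_equal; ring).
  apply mono; [exact HE| lra|].
  unfold res. rewrite (cf_mid e X Y) by assumption. unfold N2, dot in *; simpl in *.
  set (E := fst e * fst e + snd e * snd e) in *.
  match goal with |- ?g >= 0 => replace g with (fst e * (snd e * X - fst e * Y) / E)
      by (unfold E in *; field; lra) end.
  apply Rle_ge, div_nonneg; [nra|lra].
Qed.

Lemma vert_between e X a y b : N2 e > 0 -> a <= y <= b ->
  dist_seg (X, y) e <= Rmax (dist_seg (X, a) e) (dist_seg (X, b) e).
Proof.
  intros HE Hy. destruct (Req_dec a b) as [Hab|Hab].
  - subst. assert (y = b) by lra. subst. unfold Rmax. destruct Rle_dec; lra.
  - set (al := (b - y) / (b - a)).
    assert (Hal : 0 <= al <= 1).
    { unfold al. split.
      - apply div_nonneg; lra.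
      - apply (Rmult_le_reg_r (b - a)); [lra|]. unfold Rdiv. rewrite Rmult_assoc, Rinv_l by lra. lra. }
    replace (X, y) with (mix al (X, a) (X, b)).
    + apply convex; assumption.
    + unfold mix, al; simpl. f_equal; field; lra.
Qed.

Lemma horiz_between e Y a x b : N2 e > 0 -> a <= x <= b ->
  dist_seg (x, Y) e <= Rmax (dist_seg (a, Y) e) (dist_seg (b, Y) e).
Proof.
  intros HE Hy. destruct (Req_dec a b) as [Hab|Hab].
  - subst. assert (x = b) by lra. subst. unfold Rmax. destruct Rle_dec; lra.
  - set (al := (b - x) / (b - a)).
    assert (Hal : 0 <= al <= 1).
    { unfold al. split.
      - apply div_nonneg; lra.
      - apply (Rmult_le_reg_r (b - a)); [lra|]. unfold Rdiv. rewrite Rmult_assoc, Rinv_l by lra. lra. }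
    replace (x, Y) with (mix al (a, Y) (b, Y)).
    + apply convex; assumption.
    + unfold mix, al; simpl. f_equal; field; lra.
Qed.

Lemma ray_mono e th t1 t2 : N2 e > 0 -> 0 <= t1 <= t2 ->
  dist_seg (ray_pt th t1) e <= dist_seg (ray_pt th t2) e.
Proof.
  intros HE Ht. unfold ray_pt.
  destruct (Req_dec t1 0) as [H0|H0].
  - subst. eapply Rle_trans; [apply (dist_le_any _ _ 0 HE); lra|].
    simpl. replace (N2 (0 * cos th - 0 * fst e, 0 * sin th - 0 * snd e)) with 0
      by (unfold N2, dot; simpl; ring).
    rewrite sqrt_0. apply dist_ge0.
  - replace (t2 * cos th, t2 * sin th) with ((t2 / t1) * fst (t1 * cos th, t1 * sin th), (t2 / t1) * snd (t1 * cos th, t1 * sin th))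
      by (simpl; f_equal; field; lra).
    apply radial; [exact HE|].
    apply (Rmult_le_reg_r t1); [lra|]. unfold Rdiv. rewrite Rmult_assoc, Rinv_l by lra. lra.
Qed.

Lemma far_side P th t : 0 < xmin P -> 0 < cos th -> 0 <= sin th -> ray_box_far P th t ->
  t * cos th = xmax P \/ t * sin th = ymax P.
Proof.
  intros Hx Hc Hs [Ht [Hb Hmax]]. unfold in_box, ray_pt in *; simpl in *.
  destruct (Req_dec (t * cos th) (xmax P)) as [E1|E1]; [left; exact E1|].
  destruct (Req_dec (t * sin th) (ymax P)) as [E2|E2]; [right; exact E2|].
  exfalso.
  set (m := Rmin (xmax P - t * cos th) (ymax P - t * sin th)).
  assert (Hm1 : m <= xmax P - t * cos th) by apply Rmin_l.
  assert (Hm2 : m <= ymax P - t * sin th) by apply Rmin_r.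
  assert (Hm : 0 < m) by (unfold m; apply Rmin_glb_lt; lra).
  pose proof (COS_bound th). pose proof (SIN_bound th).
  assert (Hh := Hmax (t + m) ltac:(lra)).
  assert (t + m <= t); [|lra].
  apply Hh. simpl. split; split; nra.
Qed.

Lemma q1_facts p : in_quadrant 1 p ->
  0 <= theta p < PI / 2 /\ 0 < fst p /\ 0 <= snd p /\
  fst p = norm p * cos (theta p) /\ snd p = norm p * sin (theta p) /\ 0 < norm p.
Proof.
  intros [Hp Ht]. simpl in Ht.
  pose proof PI_RGT_0.
  destruct (theta_polar p Hp) as [Hx Hy]. pose proof (norm_pos p Hp).
  assert (0 < cos (theta p)) by (apply cos_gt_0; lra).
  assert (0 <= sin (theta p)) by (apply sin_ge_0; lra).
  repeat split; try lra; nra.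
Qed.

Lemma cross_gen p q r1 r2 a b : 0 <= r1 -> 0 <= r2 -> 0 <= b - a <= PI ->
  fst p = r1 * cos a -> snd p = r1 * sin a -> fst q = r2 * cos b -> snd q = r2 * sin b ->
  0 <= fst p * snd q - snd p * fst q.
Proof.
  intros H1 H2 H3 -> -> -> ->. apply cross_u; assumption.
Qed.

Lemma le_reg x a b : 0 < x -> a * x <= b * x -> a <= b.
Proof. intros. apply (Rmult_le_reg_r x); assumption. Qed.

Lemma box_in P p : In p P -> xmin P <= fst p <= xmax P /\ ymin P <= snd p <= ymax P.
Proof.
  intros H. unfold xmin, xmax, ymin, ymax.
  repeat split; [apply (lmin_le fst)|apply (lmax_ge fst)|apply (lmin_le snd)|apply (lmax_ge snd)]; exact H.
Qed.

Lemma upper1 P e tl2 tu2 : P <> nil -> (forall p, In p P -> in_quadrant 1 p) -> N2 e > 0 ->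
  ray_box_far P (theta_lb P) tl2 -> ray_box_far P (theta_ub P) tu2 ->
  forall p, In p P -> dist_seg p e <=
    Rmax (Rmax (dist_seg (ray_pt (theta_lb P) tl2) e) (dist_seg (ray_pt (theta_ub P) tu2) e))
         (dist_seg (c_far 1 P) e).
Proof.
  intros HP HQ HE Hl2 Hu2 p Hp.
  pose proof PI_RGT_0.
  set (lb := theta_lb P) in *. set (ub := theta_ub P) in *.
  set (M0 := Rmax (Rmax (dist_seg (ray_pt lb tl2) e) (dist_seg (ray_pt ub tu2) e)) (dist_seg (c_far 1 P) e)).
  assert (Ml : dist_seg (ray_pt lb tl2) e <= M0) by (unfold M0; eapply Rle_trans; [apply Rmax_l|apply Rmax_l]).
  assert (Mu : dist_seg (ray_pt ub tu2) e <= M0) by (unfold M0; eapply Rle_trans; [apply Rmax_r|apply Rmax_l]).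
  assert (Mc : dist_seg (xmax P, ymax P) e <= M0) by (unfold M0; apply Rmax_r).
  clearbody M0.
  set (X := xmax P) in *. set (Y := ymax P) in *.
  destruct (lmin_att fst P HP) as [p1 [Hp1 Ex1]].
  assert (Hxm : 0 < xmin P) by (destruct (q1_facts p1 (HQ p1 Hp1)) as [_ [? _]]; unfold xmin; lra).
  destruct (lmin_att theta P HP) as [q0 [Hq0 Eq0]].
  destruct (lmax_att theta P HP) as [q1 [Hq1 Eq1]].
  destruct (q1_facts q0 (HQ q0 Hq0)) as [Hlb _]. change (theta q0 = lb) in Eq0.
  destruct (q1_facts q1 (HQ q1 Hq1)) as [Hub _]. change (theta q1 = ub) in Eq1.
  rewrite Eq0 in Hlb. rewrite Eq1 in Hub.
  destruct (q1_facts p (HQ p Hp)) as [Htp [Hx [Hy [Hpx [Hpy Hnp]]]]].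
  assert (Hlbp : lb <= theta p) by (apply lmin_le; exact Hp).
  assert (Hubp : theta p <= ub) by (apply lmax_ge; exact Hp).
  destruct (box_in P p Hp) as [[_ HxX] [_ HyY]]. fold X in HxX. fold Y in HyY.
  assert (Hcl : 0 < cos lb) by (apply cos_gt_0; lra).
  assert (Hsl : 0 <= sin lb) by (apply sin_ge_0; lra).
  assert (Hcu : 0 < cos ub) by (apply cos_gt_0; lra).
  assert (Hsu : 0 <= sin ub) by (apply sin_ge_0; lra).
  pose proof (far_side P lb tl2 Hxm Hcl Hsl Hl2) as Sl. fold X Y in Sl.
  pose proof (far_side P ub tu2 Hxm Hcu Hsu Hu2) as Su. fold X Y in Su.
  destruct Hl2 as [Htl2 [[[_ Ha1] [_ Ha2]] _]].
  destruct Hu2 as [Htu2 [[[_ Hb1] [_ Hb2]] _]].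
  unfold ray_pt in *; simpl in *. fold X Y in Ha1, Ha2, Hb1, Hb2.
  set (a1 := tl2 * cos lb) in *. set (a2 := tl2 * sin lb) in *.
  set (b1 := tu2 * cos ub) in *. set (b2 := tu2 * sin ub) in *.
  assert (Cl : 0 <= a1 * snd p - a2 * fst p).
  { apply (cross_gen (a1, a2) p tl2 (norm p) lb (theta p)); simpl; try reflexivity; try assumption; lra. }
  assert (Cu : 0 <= fst p * b2 - snd p * b1).
  { apply (cross_gen p (b1, b2) (norm p) tu2 (theta p) ub); simpl; try reflexivity; try assumption; lra. }
  set (x := fst p) in *. set (y := snd p) in *.
  replace p with (x, y) by (unfold x, y; destruct p; reflexivity).
  destruct (Rle_dec (y * X) (x * Y)) as [CA|CB].
  - (* hits right side *)
    set (yq := X / x * y).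
    assert (Eyq : yq * x = X * y) by (unfold yq; field; lra).
    assert (Hr : dist_seg (x, y) e <= dist_seg (X, yq) e).
    { replace (X, yq) with (X / x * fst (x, y), X / x * snd (x, y)) by (unfold yq; simpl; f_equal; field; lra).
      apply radial; [exact HE|]. apply (le_reg x); [lra|]. unfold Rdiv. rewrite Rmult_assoc, Rinv_l by lra. lra. }
    assert (HA : exists a, a <= yq /\ dist_seg (X, a) e <= M0).
    { destruct Sl as [S|S].
      - exists a2. split.
        + apply (le_reg x); [lra|]. rewrite Eyq. rewrite S in Cl. lra.
        + rewrite <- S. exact Ml.
      - exists Y. split; [|exact Mc].
        apply (le_reg x); [lra|]. rewrite Eyq. rewrite S in Cl. nra. }
    assert (HB : exists b, yq <= b /\ dist_seg (X, b) e <= M0).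
    { destruct Su as [S|S].
      - exists b2. split.
        + apply (le_reg x); [lra|]. rewrite Eyq. rewrite S in Cu. lra.
        + rewrite <- S. exact Mu.
      - exists Y. split; [|exact Mc].
        apply (le_reg x); [lra|]. rewrite Eyq. lra. }
    destruct HA as [a [Ha Da]]. destruct HB as [b [Hb Db]].
    eapply Rle_trans; [exact Hr|].
    eapply Rle_trans; [apply (vert_between e X a yq b HE); lra|].
    apply Rmax_lub; assumption.
  - (* hits top side *)
    assert (Hy0 : 0 < y).
    { destruct (Req_dec y 0) as [E0|E0]; [|lra]. exfalso. apply CB. rewrite E0.
      assert (0 <= x * Y) by nra. lra. }
    set (xq := Y / y * x).
    assert (Exq : xq * y = Y * x) by (unfold xq; field; lra).
    assert (Hr : dist_seg (x, y) e <= dist_seg (xq, Y) e).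
    { replace (xq, Y) with (Y / y * fst (x, y), Y / y * snd (x, y)) by (unfold xq; simpl; f_equal; field; lra).
      apply radial; [exact HE|]. apply (le_reg y); [lra|]. unfold Rdiv. rewrite Rmult_assoc, Rinv_l by lra. lra. }
    assert (HA : exists a, xq <= a /\ dist_seg (a, Y) e <= M0).
    { destruct Sl as [S|S].
      - exists X. split; [|exact Mc].
        apply (le_reg y); [lra|]. rewrite Exq. lra.
      - exists a1. split.
        + apply (le_reg y); [lra|]. rewrite Exq. rewrite S in Cl. lra.
        + rewrite <- S. exact Ml. }
    assert (HB : exists b, b <= xq /\ dist_seg (b, Y) e <= M0).
    { destruct Su as [S|S].
      - exfalso. rewrite S in Cu. apply CB. nra.
      - exists b1. split.
        + apply (le_reg y); [lra|]. rewrite Exq. rewrite S in Cu. lra.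
        + rewrite <- S. exact Mu. }
    destruct HA as [a [Ha Da]]. destruct HB as [b [Hb Db]].
    eapply Rle_trans; [exact Hr|].
    eapply Rle_trans; [apply (horiz_between e Y b xq a HE); lra|].
    apply Rmax_lub; assumption.
Qed.

Lemma near_le P e th t p0 : N2 e > 0 -> In p0 P -> p0 <> origin -> theta p0 = th ->
  ray_box_near P th t -> dist_seg (ray_pt th t) e <= dmax P e.
Proof.
  intros HE Hp0 Hn Ht [Ht0 [_ Hmin]].
  destruct (theta_polar p0 Hn) as [Hx Hy]. rewrite Ht in Hx, Hy.
  assert (E0 : p0 = ray_pt th (norm p0)) by (unfold ray_pt; destruct p0; simpl in *; f_equal; assumption).
  assert (Hle : t <= norm p0).
  { apply Hmin; [apply Rlt_le, norm_pos; exact Hn|]. rewrite <- E0.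
    destruct (box_in P p0 Hp0). split; assumption. }
  eapply Rle_trans; [apply (ray_mono e th t (norm p0) HE); lra|].
  rewrite <- E0. unfold dmax. apply (lmax_ge (fun p => dist_seg p e)). exact Hp0.
Qed.

Lemma lower1 P e tl1 tu1 : P <> nil -> (forall p, In p P -> in_quadrant 1 p) -> in_quadrant 1 e ->
  (theta e > theta_ub P \/ theta e < theta_lb P) ->
  ray_box_near P (theta_lb P) tl1 -> ray_box_near P (theta_ub P) tu1 ->
  dist_seg (ray_pt (theta_lb P) tl1) e <= dmax P e /\
  dist_seg (ray_pt (theta_ub P) tu1) e <= dmax P e /\
  (if Rlt_dec (norm e) (norm (c_far 1 P)) then dist_seg (c_near 1 P) e else dist_seg (c_far 1 P) e)
   <= dmax P e.
Proof.
  intros HP HQ He Hth Hl1 Hu1.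
  pose proof PI_RGT_0.
  destruct (q1_facts e He) as [Hte [Hex [Hey [Hpex [Hpey Hne]]]]].
  assert (HE : N2 e > 0) by (unfold N2, dot; nra).
  assert (Hd : forall p, In p P -> dist_seg p e <= dmax P e)
    by (intros p Hp; unfold dmax; apply (lmax_ge (fun p => dist_seg p e)); exact Hp).
  destruct (lmin_att theta P HP) as [q0 [Hq0 Eq0]].
  destruct (lmax_att theta P HP) as [q1 [Hq1 Eq1]].
  split; [apply (near_le P e _ tl1 q0 HE Hq0 (proj1 (HQ q0 Hq0)) Eq0 Hl1)|].
  split; [apply (near_le P e _ tu1 q1 HE Hq1 (proj1 (HQ q1 Hq1)) Eq1 Hu1)|].
  destruct (lmin_att fst P HP) as [p1 [Hp1 E1]].
  destruct (lmin_att snd P HP) as [p2 [Hp2 E2]].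
  destruct (lmax_att fst P HP) as [p3 [Hp3 E3]].
  destruct (lmax_att snd P HP) as [p4 [Hp4 E4]].
  change (fst p1 = xmin P) in E1. change (snd p2 = ymin P) in E2.
  change (fst p3 = xmax P) in E3. change (snd p4 = ymax P) in E4.
  destruct (box_in P p1 Hp1) as [B1x B1y].
  destruct (box_in P p2 Hp2) as [B2x B2y].
  destruct (box_in P p3 Hp3) as [B3x B3y].
  destruct (box_in P p4 Hp4) as [B4x B4y].
  destruct (q1_facts p1 (HQ p1 Hp1)) as [T1 [X1 [Y1 [P1x [P1y N1]]]]].
  destruct (q1_facts p2 (HQ p2 Hp2)) as [T2 [X2 [Y2 [P2x [P2y N2']]]]].
  destruct (q1_facts p3 (HQ p3 Hp3)) as [T3 [X3 [Y3 [P3x [P3y N3]]]]].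
  destruct (q1_facts p4 (HQ p4 Hp4)) as [T4 [X4 [Y4 [P4x [P4y N4]]]]].
  assert (Hlb1 : theta_lb P <= theta p1) by (apply lmin_le; exact Hp1).
  assert (Hlb2 : theta_lb P <= theta p2) by (apply lmin_le; exact Hp2).
  assert (Hlb3 : theta_lb P <= theta p3) by (apply lmin_le; exact Hp3).
  assert (Hlb4 : theta_lb P <= theta p4) by (apply lmin_le; exact Hp4).
  assert (Hub1 : theta p1 <= theta_ub P) by (apply lmax_ge; exact Hp1).
  assert (Hub2 : theta p2 <= theta_ub P) by (apply lmax_ge; exact Hp2).
  assert (Hub3 : theta p3 <= theta_ub P) by (apply lmax_ge; exact Hp3).
  assert (Hub4 : theta p4 <= theta_ub P) by (apply lmax_ge; exact Hp4).
  set (xm := xmin P) in *. set (ym := ymin P) in *. set (X := xmax P) in *. set (Y := ymax P) in *.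
  assert (Ep1 : dist_seg (xm, snd p1) e = dist_seg p1 e) by (rewrite <- E1; destruct p1; reflexivity).
  assert (Ep2 : dist_seg (fst p2, ym) e = dist_seg p2 e) by (rewrite <- E2; destruct p2; reflexivity).
  assert (Ep3 : dist_seg (X, snd p3) e = dist_seg p3 e) by (rewrite <- E3; destruct p3; reflexivity).
  assert (Ep4 : dist_seg (fst p4, Y) e = dist_seg p4 e) by (rewrite <- E4; destruct p4; reflexivity).
  destruct (Rlt_dec (norm e) (norm (c_far 1 P))) as [Hlt|Hge]; simpl.
  - fold xm ym. destruct Hth as [Ha|Hb].
    +
      assert (C : 0 <= fst p1 * snd e - snd p1 * fst e).
      { apply (cross_gen p1 e (norm p1) (norm e) (theta p1) (theta e)); try assumption; lra. }
      apply Rle_trans with (dist_seg (fst p2, ym) e); [|rewrite Ep2; apply Hd; exact Hp2].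
      apply cn_right; try assumption; try lra. rewrite E1 in C. nra.
    + assert (C : 0 <= fst e * snd p2 - snd e * fst p2).
      { apply (cross_gen e p2 (norm e) (norm p2) (theta e) (theta p2)); try assumption; lra. }
      apply Rle_trans with (dist_seg (xm, snd p1) e); [|rewrite Ep1; apply Hd; exact Hp1].
      apply cn_up; try assumption; try lra. rewrite E2 in C. nra.
  - fold X Y.
    assert (HXY : X * X + Y * Y <= N2 e).
    { apply sqrt_le_0; [nra | unfold N2, dot; nra|]. apply Rnot_lt_le in Hge. exact Hge. }
    destruct Hth as [Ha|Hb].
    + assert (C : 0 <= fst p4 * snd e - snd p4 * fst e).
      { apply (cross_gen p4 e (norm p4) (norm e) (theta p4) (theta e)); try assumption; lra. }
      apply Rle_trans with (dist_seg (X, snd p3) e); [|rewrite Ep3; apply Hd; exact Hp3].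
      apply cf_down; try assumption; try lra. rewrite E4 in C. nra.
    + assert (C : 0 <= fst e * snd p3 - snd e * fst p3).
      { apply (cross_gen e p3 (norm e) (norm p3) (theta e) (theta p3)); try assumption; lra. }
      apply Rle_trans with (dist_seg (fst p4, Y) e); [|rewrite Ep4; apply Hd; exact Hp4].
      apply cf_left; try assumption; try lra. rewrite E3 in C. nra.
Qed.

Definition Thm (k : nat) (P : list pt) (e : pt) (tl1 tl2 tu1 tu2 : R) : Prop :=
  (1 <= k <= 4)%nat ->
  P <> nil ->
  (forall p, In p P -> in_quadrant k p) ->
  in_quadrant k e ->
  (theta e > theta_ub P \/ theta e < theta_lb P) ->
  ray_box_near P (theta_lb P) tl1 ->
  ray_box_far P (theta_lb P) tl2 ->
  ray_box_near P (theta_ub P) tu1 ->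
  ray_box_far P (theta_ub P) tu2 ->
  let l1 := ray_pt (theta_lb P) tl1 in
  let l2 := ray_pt (theta_lb P) tl2 in
  let u1 := ray_pt (theta_ub P) tu1 in
  let u2 := ray_pt (theta_ub P) tu2 in
  let cn := c_near k P in
  let cf := c_far k P in
  let D := if Rlt_dec (norm e) (norm cf) then dist_seg cn e else dist_seg cf e in
  Rmax (Rmax (Rmin (dist_seg l1 e) (dist_seg l2 e))
             (Rmin (dist_seg u1 e) (dist_seg u2 e))) D <= dmax P e
  /\
  dmax P e <= Rmax (Rmax (Rmax (dist_seg l1 e) (dist_seg l2 e))
                         (Rmax (dist_seg u1 e) (dist_seg u2 e)))
                   (dist_seg cf e).

Lemma thm1 P e tl1 tl2 tu1 tu2 : Thm 1 P e tl1 tl2 tu1 tu2.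
Proof.
  intros _ HP HQ He Hth Hl1 Hl2 Hu1 Hu2. cbv zeta.
  destruct (lower1 P e tl1 tu1 HP HQ He Hth Hl1 Hu1) as [A [B C]].
  assert (HE : N2 e > 0).
  { destruct (q1_facts e He) as [_ [Hex _]]. unfold N2, dot. nra. }
  pose proof (upper1 P e tl2 tu2 HP HQ HE Hl2 Hu2) as U.
  split.
  - apply Rmax_lub; [apply Rmax_lub|].
    + eapply Rle_trans; [apply Rmin_l|exact A].
    + eapply Rle_trans; [apply Rmin_l|exact B].
    + exact C.
  - unfold dmax at 1. apply lmax_le; [exact HP|]. intros p Hp.
    eapply Rle_trans; [apply (U p Hp)|].
    apply Rmax_lub; [apply Rmax_lub|].
    + eapply Rle_trans; [|apply Rmax_l]. eapply Rle_trans; [|apply Rmax_l]. apply Rmax_r.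
    + eapply Rle_trans; [|apply Rmax_l]. eapply Rle_trans; [|apply Rmax_r]. apply Rmax_r.
    + apply Rmax_r.
Qed.

Definition rot (p : pt) : pt := (snd p, - fst p).

Lemma rot_ne p : p <> origin -> rot p <> origin.
Proof.
  intros H C. apply H. unfold rot, origin in *. destruct p as [x y]. simpl in C.
  injection C as C1 C2. f_equal; lra.
Qed.

Lemma norm_rot p : norm (rot p) = norm p.
Proof. unfold norm, rot; simpl. f_equal. ring. Qed.

Lemma dist_rot p e : dist_seg (rot p) (rot e) = dist_seg p e.
Proof.
  unfold dist_seg, rot, norm; simpl.
  replace (snd p * snd e + - fst p * - fst e) with (fst p * fst e + snd p * snd e) by ring.
  replace (snd e * snd e + - fst e * - fst e) with (fst e * fst e + snd e * snd e) by ring.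
  f_equal. ring.
Qed.

Lemma theta_rot p : p <> origin -> PI / 2 <= theta p < 2 * PI -> theta (rot p) = theta p - PI / 2.
Proof.
  intros Hp Ht. destruct (theta_polar p Hp) as [Hx Hy].
  apply theta_unique; [apply rot_ne; exact Hp|lra| |]; rewrite norm_rot; unfold rot; simpl.
  - rewrite cos_minus, cos_PI2, sin_PI2. rewrite Hy. ring.
  - rewrite sin_minus, cos_PI2, sin_PI2. rewrite Hx. ring.
Qed.

Lemma quad_rot k p : (1 <= k <= 3)%nat -> in_quadrant (S k) p ->
  in_quadrant k (rot p) /\ theta (rot p) = theta p - PI / 2.
Proof.
  intros Hk [Hp Ht]. pose proof PI_RGT_0.
  replace (S k - 1)%nat with k in Ht by lia.
  rewrite S_INR in Ht.
  assert (H1 : 1 <= INR k) by (replace 1 with (INR 1) by reflexivity; apply le_INR; lia).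
  assert (H3 : INR k <= 3) by (replace 3 with (INR 3) by (simpl; ring); apply le_INR; lia).
  assert (Er : theta (rot p) = theta p - PI / 2).
  { apply theta_rot; [exact Hp|]. split; nra. }
  split; [|exact Er].
  split; [apply rot_ne; exact Hp|]. rewrite Er. rewrite minus_INR by lia. simpl INR. lra.
Qed.

Lemma xmin_rot P : P <> nil -> xmin (map rot P) = ymin P.
Proof. intros. unfold xmin, ymin. rewrite lmin_map. reflexivity. Qed.
Lemma xmax_rot P : P <> nil -> xmax (map rot P) = ymax P.
Proof. intros. unfold xmax, ymax. rewrite lmax_map. reflexivity. Qed.
Lemma ymin_rot P : P <> nil -> ymin (map rot P) = - xmax P.
Proof. intros. unfold ymin, xmax. rewrite lmin_map. unfold rot; simpl. apply (lmin_opp fst); assumption. Qed.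
Lemma ymax_rot P : P <> nil -> ymax (map rot P) = - xmin P.
Proof. intros. unfold ymax, xmin. rewrite lmax_map. unfold rot; simpl. apply (lmax_opp fst); assumption. Qed.

Lemma in_box_rot P q : P <> nil -> (in_box (map rot P) (rot q) <-> in_box P q).
Proof.
  intros HP. unfold in_box. rewrite xmin_rot, xmax_rot, ymin_rot, ymax_rot by exact HP.
  unfold rot; simpl. split; intros; lra.
Qed.

Lemma ray_rot th t : ray_pt (th - PI / 2) t = rot (ray_pt th t).
Proof.
  unfold ray_pt, rot; simpl. rewrite cos_minus, sin_minus, cos_PI2, sin_PI2. f_equal; ring.
Qed.

Lemma near_rot P th t : P <> nil -> ray_box_near P th t -> ray_box_near (map rot P) (th - PI / 2) t.
Proof.
  intros HP [H0 [H1 H2]]. split; [exact H0|]. split.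
  - rewrite ray_rot, in_box_rot by exact HP. exact H1.
  - intros t' Ht'. rewrite ray_rot, in_box_rot by exact HP. apply H2; exact Ht'.
Qed.

Lemma far_rot P th t : P <> nil -> ray_box_far P th t -> ray_box_far (map rot P) (th - PI / 2) t.
Proof.
  intros HP [H0 [H1 H2]]. split; [exact H0|]. split.
  - rewrite ray_rot, in_box_rot by exact HP. exact H1.
  - intros t' Ht'. rewrite ray_rot, in_box_rot by exact HP. apply H2; exact Ht'.
Qed.

Lemma cfar_rot k P : P <> nil -> (1 <= k <= 3)%nat -> c_far k (map rot P) = rot (c_far (S k) P).
Proof.
  intros HP Hk. destruct k as [|[|[|[|k]]]]; try lia; simpl;
  rewrite ?xmin_rot, ?xmax_rot, ?ymin_rot, ?ymax_rot by exact HP; reflexivity.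
Qed.

Lemma cnear_rot k P : P <> nil -> (1 <= k <= 3)%nat -> c_near k (map rot P) = rot (c_near (S k) P).
Proof.
  intros HP Hk. destruct k as [|[|[|[|k]]]]; try lia; simpl;
  rewrite ?xmin_rot, ?xmax_rot, ?ymin_rot, ?ymax_rot by exact HP; reflexivity.
Qed.

Lemma dmax_rot P e : dmax (map rot P) (rot e) = dmax P e.
Proof.
  unfold dmax. rewrite lmax_map. apply lmax_ext. intros p _. apply dist_rot.
Qed.

Lemma lb_rot k P : (1 <= k <= 3)%nat -> P <> nil -> (forall p, In p P -> in_quadrant (S k) p) ->
  theta_lb (map rot P) = theta_lb P - PI / 2.
Proof.
  intros Hk HP HQ. unfold theta_lb. rewrite lmin_map.
  rewrite (lmin_ext _ (fun p => theta p - PI / 2)).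
  - apply lmin_shift; exact HP.
  - intros p Hp. apply (quad_rot k p Hk (HQ p Hp)).
Qed.

Lemma ub_rot k P : (1 <= k <= 3)%nat -> P <> nil -> (forall p, In p P -> in_quadrant (S k) p) ->
  theta_ub (map rot P) = theta_ub P - PI / 2.
Proof.
  intros Hk HP HQ. unfold theta_ub. rewrite lmax_map.
  rewrite (lmax_ext _ (fun p => theta p - PI / 2)).
  - apply lmax_shift; exact HP.
  - intros p Hp. apply (quad_rot k p Hk (HQ p Hp)).
Qed.

Lemma thm_step k : (1 <= k <= 3)%nat ->
  (forall P e tl1 tl2 tu1 tu2, Thm k P e tl1 tl2 tu1 tu2) ->
  forall P e tl1 tl2 tu1 tu2, Thm (S k) P e tl1 tl2 tu1 tu2.
Proof.
  intros Hk IH P e tl1 tl2 tu1 tu2 _ HP HQ He Hth Hl1 Hl2 Hu1 Hu2. cbv zeta.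
  assert (HP' : map rot P <> nil) by (destruct P; [exact HP|discriminate]).
  pose proof (lb_rot k P Hk HP HQ) as Elb. pose proof (ub_rot k P Hk HP HQ) as Eub.
  destruct (quad_rot k e Hk He) as [He' Ete].
  specialize (IH (map rot P) (rot e) tl1 tl2 tu1 tu2). unfold Thm in IH. cbv zeta in IH.
  rewrite Elb, Eub, !ray_rot, !dist_rot, (cfar_rot k P HP Hk), (cnear_rot k P HP Hk),
    !norm_rot, !dist_rot, dmax_rot in IH.
  apply IH.
  - lia.
  - exact HP'.
  - intros q Hq. apply in_map_iff in Hq. destruct Hq as [p [<- Hp]]. apply (quad_rot k p Hk (HQ p Hp)).
  - exact He'.
  - rewrite Ete. lra.
  - apply near_rot; assumption.
  - apply far_rot; assumption.
  - apply near_rot; assumption.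
  - apply far_rot; assumption.
Qed.

Lemma thm_all k P e tl1 tl2 tu1 tu2 : Thm k P e tl1 tl2 tu1 tu2.
Proof.
  intros Hk. revert P e tl1 tl2 tu1 tu2 Hk.
  assert (H1 : forall P e tl1 tl2 tu1 tu2, Thm 1 P e tl1 tl2 tu1 tu2) by exact thm1.
  assert (H2 := thm_step 1 ltac:(lia) H1).
  assert (H3 := thm_step 2 ltac:(lia) H2).
  assert (H4 := thm_step 3 ltac:(lia) H3).
  destruct k as [|[|[|[|[|k]]]]]; intros P e tl1 tl2 tu1 tu2 Hk; try lia.
  - apply H1; exact Hk.
  - apply H2; exact Hk.
  - apply H3; exact Hk.
  - apply H4; exact Hk.
Qed.

Theorem theorem4 (k : nat) (P : list pt) (e : pt)
  (tl1 tl2 tu1 tu2 : R) :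
  (1 <= k <= 4)%nat ->
  P <> nil ->
  (forall p, In p P -> in_quadrant k p) ->
  in_quadrant k e ->
  (theta e > theta_ub P \/ theta e < theta_lb P) ->
  ray_box_near P (theta_lb P) tl1 ->
  ray_box_far P (theta_lb P) tl2 ->
  ray_box_near P (theta_ub P) tu1 ->
  ray_box_far P (theta_ub P) tu2 ->
  let l1 := ray_pt (theta_lb P) tl1 in
  let l2 := ray_pt (theta_lb P) tl2 in
  let u1 := ray_pt (theta_ub P) tu1 in
  let u2 := ray_pt (theta_ub P) tu2 in
  let cn := c_near k P in
  let cf := c_far k P in
  let D := if Rlt_dec (norm e) (norm cf) then dist_seg cn e else dist_seg cf e in
  Rmax (Rmax (Rmin (dist_seg l1 e) (dist_seg l2 e))
             (Rmin (dist_seg u1 e) (dist_seg u2 e))) D <= dmax P e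
  /\
  dmax P e <= Rmax (Rmax (Rmax (dist_seg l1 e) (dist_seg l2 e))
                         (Rmax (dist_seg u1 e) (dist_seg u2 e)))
                   (dist_seg cf e).
Proof.
  exact (thm_all k P e tl1 tl2 tu1 tu2).
Qed.
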